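(* Let $R$ be a commutative Noetherian semiring and let $I$ be a $k$-ideal of $R$. Then $I$ can be represented as a finite intersection $I=\bigcap_{i=1}^n Q_i$ of primary ideals $Q_i$ of $R$; that is, $I$ has a reduced primary decomposition.
   Context: A semiring is a set $R$ with addition and multiplication such that $(R,+)$ is a commutative monoid with identity $0$, $(R,\cdot)$ is a monoid with identity $1$, multiplication distributes over addition on both sides, $0\cdot r=0=r\cdot 0$ for all $r$, and $1\neq 0$. $R$ is commutative if $(R,\cdot)$ is commutative. An ideal of $R$ is a nonempty subset closed under addition and under multiplication by arbitrary elements of $R$. $R$ is Noetherian if it satisfies the ascending chain condition on ideals. An ideal $I$ is a $k$-ideal if $x+y\in I$ and $x\in I$ imply $y\in I$. The radical of an ideal $I$ is $\sqrt{I}=\{a\in R\mid a^n\in I \text{ for some } n\ge 1\}$. A proper ideal $Q$ is primary if $xy\in Q$ implies $x\in Q$ or $y\in\sqrt{Q}$. A primary decomposition $I=\bigcap_{i=1}^n Q_i$ (each $Q_i$ primary, $P_i=\sqrt{Q_i}$) is reduced if the $P_i$ are pairwise distinct and $I$ is not the intersection of any proper subfamily of the $Q_i$. (The empty intersection is understood as $R$.) *)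

(* Defs.v *)
(* A commutative semiring with 1 <> 0 (and 0 absorbing,
   which is part of MathComp's semiring axioms) is a comNzSemiRingType. *)
From mathcomp Require Import all_boot all_order all_algebra.
Set Implicit Arguments. Unset Strict Implicit. Unset Printing Implicit Defensive.
Import GRing.Theory.
Local Open Scope ring_scope.

Definition set_eq (R : Type) (A B : R -> Prop) : Prop := forall x, A x <-> B x.

Definition is_ideal (R : comNzSemiRingType) (I : R -> Prop) : Prop :=
  (exists x, I x) /\
  (forall x y, I x -> I y -> I (x + y)) /\
  (forall r x, I x -> I (r * x)).

Definition noetherian (R : comNzSemiRingType) : Prop :=
  forall J : nat -> R -> Prop,
    (forall n, is_ideal (J n)) ->
    (forall n x, J n x -> J n.+1 x) ->
    exists N, forall m, (N <= m)%N -> forall x, J m x -> J N x.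

Definition is_k_ideal (R : comNzSemiRingType) (I : R -> Prop) : Prop :=
  is_ideal I /\ (forall x y, I (x + y) -> I x -> I y).

Definition radical (R : comNzSemiRingType) (I : R -> Prop) : R -> Prop :=
  fun a => exists n, (1 <= n)%N /\ I (a ^+ n).

Definition is_primary (R : comNzSemiRingType) (Q : R -> Prop) : Prop :=
  is_ideal Q /\ (exists x, ~ Q x) /\
  (forall x y, Q (x * y) -> Q x \/ radical Q y).

Definition is_inter_of (R : comNzSemiRingType) (I : R -> Prop) (n : nat)
  (Q : 'I_n -> R -> Prop) (S : {set 'I_n}) : Prop :=
  set_eq I (fun x => forall i, i \in S -> Q i x).

Definition reduced_primary_decomposition (R : comNzSemiRingType)
  (I : R -> Prop) (n : nat) (Q : 'I_n -> R -> Prop) : Prop :=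
  (forall i, is_primary (Q i)) /\
  is_inter_of I Q setT /\
  (forall i j, i != j -> ~ set_eq (radical (Q i)) (radical (Q j))) /\
  (forall S : {set 'I_n}, S != setT -> ~ is_inter_of I Q S).

(* Main.v *)
Require Import Defs.
From mathcomp Require Import all_boot all_order all_algebra.
From mathcomp Require Import ring.
From Stdlib Require Import Classical ClassicalEpsilon.
Set Implicit Arguments. Unset Strict Implicit. Unset Printing Implicit Defensive.
Import GRing.Theory.
Local Open Scope ring_scope.

Section Aux.
Variable R : comNzSemiRingType.
Implicit Types (I J P A Q E : R -> Prop).

Lemma ideal0 I : is_ideal I -> I 0.
Proof. move=> [[x Hx] [_ HM]]. by rewrite -(mul0r x); apply: HM. Qed.

Lemma idealD I x y : is_ideal I -> I x -> I y -> I (x + y).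
Proof. by move=> [_ [HD _]]; apply: HD. Qed.

Lemma idealM I r x : is_ideal I -> I x -> I (r * x).
Proof. by move=> [_ [_ HM]]; apply: HM. Qed.

Lemma idealMr I r x : is_ideal I -> I x -> I (x * r).
Proof. by move=> HI Hx; rewrite mulrC; apply: idealM. Qed.

Lemma ideal_exp I p m : is_ideal I -> I p -> (0 < m)%N -> I (p ^+ m).
Proof. move=> HI Hp; case: m => // m _; rewrite exprSr; exact: idealM. Qed.

Lemma max_elt (noeth : noetherian R) (F : (R -> Prop) -> Prop) :
  (forall J, F J -> is_ideal J) -> (exists J, F J) ->
  exists J, F J /\ forall E, F E -> (forall x, J x -> E x) -> forall x, E x -> J x.
Proof.
move=> Fid [J0 FJ0].
apply: NNPP => Hno.
have step : forall J : {J | F J}, {E : {E | F E} | (forall x, sval J x -> sval E x)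
      /\ exists x, sval E x /\ ~ sval J x}.
  move=> [J FJ]; apply: constructive_indefinite_description.
  apply: NNPP => H; apply: Hno; exists J; split => // E FE JE x Ex.
  apply: NNPP => nJx; apply: H; exists (exist _ E FE); split => //.
  by exists x.
pose f (J : {J | F J}) := sval (step J).
pose s k := iter k f (exist _ J0 FJ0).
have H1 : forall k, is_ideal (sval (s k)) by move=> k; apply: Fid; exact: (svalP (s k)).
have H2 : forall k x, sval (s k) x -> sval (s k.+1) x.
  by move=> k x Hx; rewrite /s iterS; exact: (proj1 (svalP (step (s k)))).
have [N HN] := noeth (fun k => sval (s k)) H1 H2.
have [_ [x [Hx nx]]] := svalP (step (s N)).
apply: nx; apply: (HN N.+1 (leqnSn N)); exact: Hx.
Qed.

Definition decomp I : Prop :=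
  exists n (Q : 'I_n -> R -> Prop), (forall i, is_primary (Q i)) /\ is_inter_of I Q setT.

Lemma decomp_top I : (forall x, I x) -> decomp I.
Proof.
move=> HI; exists 0%N, (fun _ _ => False); split; first by case.
by move=> x; split => // _; case.
Qed.

Lemma decomp_cap I A Q0 : decomp A -> is_primary Q0 ->
  (forall x, I x <-> A x /\ Q0 x) -> decomp I.
Proof.
move=> [n [Q [HQ HA]]] HQ0 HI.
exists n.+1, (fun k => match unlift ord_max k with Some i => Q i | None => Q0 end).
split; first by move=> k; case: (unlift ord_max k).
move=> x; rewrite HI; split.
- move=> [Ax Q0x] k _; case: unliftP => [i _|_] //.
  exact: ((HA x).1 Ax i (in_setT i)).
- move=> H; split.
    apply/(HA x).2 => i _; move: (H (lift ord_max i) (in_setT _)); by rewrite liftK.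
  by move: (H ord_max (in_setT _)); rewrite unlift_none.
Qed.

Lemma merge_primary Q1 Q2 : is_primary Q1 -> is_primary Q2 ->
  set_eq (radical Q1) (radical Q2) -> is_primary (fun x => Q1 x /\ Q2 x).
Proof.
move=> [I1 [[x1 nx1] P1]] [I2 [_ P2]] Hr.
have both : forall y, radical Q1 y -> radical (fun x => Q1 x /\ Q2 x) y.
  move=> y Hy; have [a [a1 Ha]] := Hy; have [b [b1 Hb]] := (Hr y).1 Hy.
  exists (a + b)%N; split; first by rewrite addn_gt0 a1.
  by rewrite exprD; split; [apply: idealMr | apply: idealM].
split; last split.
- split; first by exists 0; split; apply: ideal0.
  split.
    by move=> x y [? ?] [? ?]; split; apply: idealD.
  by move=> r x [? ?]; split; apply: idealM.
- by exists x1 => -[].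
- move=> x y [H1 H2].
  case: (classic (Q1 x)) => q1.
    case: (classic (Q2 x)) => q2; first by left.
    right; apply: both; apply/(Hr y).2.
    by case: (P2 x y H2).
  right; apply: both; by case: (P1 x y H1).
Qed.

Lemma Qprim P J : is_ideal P -> (exists x, ~ P x) ->
  (forall u v, P (u * v) -> P u \/ P v) -> is_ideal J -> (forall x, J x -> P x) ->
  (forall p, P p -> exists m, (0 < m)%N /\ J (p ^+ m)) ->
  is_primary (fun r => exists u, ~ P u /\ J (u * r)).
Proof.
move=> HP [x0 nx0] Pprime HJ JP HC.
have nP1 : ~ P 1 by move=> P1; apply: nx0; rewrite -(mulr1 x0); apply: idealM.
split; last split.
- split; first by exists 0, 1; split => //; rewrite mulr0; apply: ideal0.
  split.
    move=> x y [u1 [nu1 J1]] [u2 [nu2 J2]]; exists (u1 * u2); split.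
      by case/Pprime.
    have -> : u1 * u2 * (x + y) = u2 * (u1 * x) + u1 * (u2 * y) by ring.
    by apply: idealD => //; apply: idealM.
  move=> r x [u [nu Ju]]; exists u; split => //.
  have -> : u * (r * x) = r * (u * x) by ring.
  exact: idealM.
- exists 1 => -[u [nu Ju]]; apply: nu; apply: JP; by rewrite -(mulr1 u).
- move=> x y [u [nu Ju]].
  case: (classic (P y)) => Py.
    right; have [m [m0 Jm]] := HC y Py; exists m; split => //.
    by exists 1; split => //; rewrite mul1r.
  left; exists (u * y); split; first by case/Pprime.
  by rewrite mulrAC -mulrA.
Qed.

Lemma restrict_decomp I n (Q : 'I_n -> R -> Prop) (S : {set 'I_n}) :
  (forall i, i \in S -> is_primary (Q i)) -> is_inter_of I Q S ->
  exists Q' : 'I_#|S| -> R -> Prop, (forall k, is_primary (Q' k)) /\ is_inter_of I Q' setT.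
Proof.
move=> HP HI; exists (fun k => Q (enum_val k)); split.
  by move=> k; apply: HP; exact: enum_valP.
move=> x; rewrite (HI x); split.
- by move=> H k _; apply: H; exact: enum_valP.
- move=> H i iS; have := H (enum_rank_in iS i) (in_setT _).
  by rewrite (enum_rankK_in iS iS).
Qed.


Lemma core (noeth : noetherian R) I P A :
  is_k_ideal I -> is_ideal P -> (forall x y, P (x + y) -> P x -> P y) ->
  (forall x, I x -> P x) -> is_ideal A -> (forall x, I x -> A x) ->
  (forall z p, A z -> P p -> I (z * p)) ->
  exists J, [/\ is_ideal J, (forall x, I x -> J x), (forall x, J x -> P x),
     (forall z, J z -> A z -> I z) &
     (forall p, P p -> exists m, (0 < m)%N /\ J (p ^+ m))].
Proof.
move=> [HI kI] HP kP IP HA IA AP.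
pose V x := exists y, I (x + y).
have V0 : V 0 by exists 0; rewrite addr0; apply: ideal0.
have VD : forall x y, V x -> V y -> V (x + y).
  move=> x y [x' Hx] [y' Hy]; exists (x' + y'); rewrite addrACA; exact: idealD.
have VM : forall r x, V x -> V (r * x).
  move=> r x [x' Hx]; exists (r * x'); rewrite -mulrDr; exact: idealM.
have VI : is_ideal V by split; [exists 0 | split].
pose Sym J := forall j X, J j -> I (j + X) -> J X.
pose F J := [/\ is_ideal J, (forall x, I x -> J x), (forall x, J x -> P x),
     (forall z, J z -> A z -> I z) & Sym J].
have [J [[HJ IJ JP JA SJ] Jmax]] : exists J, F J /\ forall E, F E ->
     (forall x, J x -> E x) -> forall x, E x -> J x.
  apply: max_elt => //; first by move=> J [].
  exists I; split => //; by move=> j X Ij IjX; exact: (kI j X IjX Ij).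
exists J; split => // p Pp.
have [c Hc] : exists c, forall k, (c <= k)%N -> forall s, V (s * p ^+ k) -> V (s * p ^+ c).
  have := noeth (fun k s => V (s * p ^+ k)).
  case.
  - move=> k; split; first by exists 0; rewrite mul0r.
    split; first by move=> x y Hx Hy; rewrite mulrDl; exact: VD.
    by move=> r x Hx; rewrite -mulrA; exact: VM.
  - by move=> k x Hx; rewrite exprSr mulrA mulrC; exact: VM.
  by move=> N HN; exists N.
have [M HM] : exists M, forall k, (M <= k)%N -> forall u, V u /\ J (u * p ^+ k) ->
     V u /\ J (u * p ^+ M).
  have := noeth (fun k u => V u /\ J (u * p ^+ k)).
  case.
  - move=> k; split; first by exists 0; rewrite mul0r; split => //; exact: ideal0.
    split; first by move=> x y [Vx Jx] [Vy Jy]; rewrite mulrDl; split; [exact: VD | exact: idealD].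
    by move=> r x [Vx Jx]; rewrite -mulrA; split; [exact: VM | exact: idealM].
  - by move=> k x [Vx Jx]; split => //; rewrite exprSr mulrA; exact: idealMr.
  by move=> N HN; exists N.
pose n := M.+1.
pose m := (c + n)%N.
have pm : p ^+ m = p ^+ c * p ^+ n by rewrite exprD.
have n0 : (0 < n)%N by [].
have m0 : (0 < m)%N by rewrite addn_gt0 orbT.
pose E0 x := exists j s v, [/\ J j, V v & x = j + s * p ^+ m + v * p ^+ n].
pose E x := exists i, I i /\ E0 (x + i).
have JE : forall x, J x -> E x.
  move=> x Jx; exists 0; split; first exact: ideal0.
  by exists x, 0, 0; split => //; rewrite !mul0r !addr0.
have IE : forall x, I x -> E x by move=> x Ix; apply: JE; exact: IJ.
have HE : is_ideal E.
  split; first by exists 0; apply: IE; exact: ideal0.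
  split.
    move=> x y [i1 [Ii1 [j1 [s1 [v1 [Jj1 Vv1 E1]]]]]] [i2 [Ii2 [j2 [s2 [v2 [Jj2 Vv2 E2]]]]]].
    exists (i1 + i2); split; first exact: idealD.
    exists (j1 + j2), (s1 + s2), (v1 + v2); split; [exact: idealD | exact: VD |].
    rewrite addrACA E1 E2; ring.
  move=> r x [i1 [Ii1 [j1 [s1 [v1 [Jj1 Vv1 E1]]]]]].
  exists (r * i1); split; first exact: idealM.
  exists (r * j1), (r * s1), (r * v1); split; [exact: idealM | exact: VM |].
  rewrite -mulrDr E1; ring.
have EP : forall x, E x -> P x.
  move=> x [i [Ii [j [s [v [Jj Vv Ex]]]]]].
  apply: (kP i x); last exact: IP.
  rewrite addrC Ex; apply: (idealD HP); first apply: (idealD HP).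
  - exact: JP.
  - by apply: (idealM _ HP); apply: ideal_exp.
  - by apply: (idealM _ HP); apply: ideal_exp.
have EA : forall z, E z -> A z -> I z.
  move=> x [i [Ii [j [s [v [Jj Vv Ex]]]]]] Ax.
  have Az : A (x + i) by apply: idealD => //; exact: IA.
  have Hzp := AP _ _ Az Pp.
  have Vs : V (s * p ^+ m.+1).
    exists (j * p + v * p ^+ n.+1).
    have <- : (x + i) * p = s * p ^+ m.+1 + (j * p + v * p ^+ n.+1).
      by rewrite Ex !exprSr; ring.
    exact: Hzp.
  have Vs' := Hc m.+1 (leq_trans (leq_addr _ _) (leqnSn _)) s Vs.
  pose u := s * p ^+ c + v.
  have Vu : V u by exact: VD.
  have Ez : x + i = j + u * p ^+ n by rewrite Ex pm /u; ring.
  have Ju : J (u * p ^+ n.+1).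
    apply: (SJ (j * p)); first exact: idealMr.
    have <- : (x + i) * p = j * p + u * p ^+ n.+1 by rewrite Ez exprSr; ring.
    exact: Hzp.
  have [_ JuM] := HM n.+1 (leq_trans (leqnSn _) (leqnSn _)) u (conj Vu Ju).
  have Jun : J (u * p ^+ n) by rewrite /n exprSr mulrA; exact: idealMr.
  have Jz : J (x + i) by rewrite Ez; exact: idealD.
  apply: (kI i x); last exact: Ii.
  rewrite addrC; exact: JA.
have SE : Sym E.
  move=> x X [i [Ii [j [s [v [Jj Vv Ex]]]]]] IxX.
  have H1 : I (j + (s * p ^+ m + v * p ^+ n + X)).
    have -> : j + (s * p ^+ m + v * p ^+ n + X) = (x + X) + i by rewrite [RHS]addrAC Ex; ring.
    exact: idealD.
  have JY := SJ _ _ Jj H1.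
  have Vs : V (s * p ^+ m).
    exists (j + v * p ^+ n + X).
    have -> : s * p ^+ m + (j + v * p ^+ n + X) = j + (s * p ^+ m + v * p ^+ n + X) by ring.
    exact: H1.
  have [t Ht] := Hc m (leq_addr _ _) s Vs.
  have [v' Hv'] := Vv.
  have Vt : V t by exists (s * p ^+ c); rewrite addrC.
  have Vv' : V v' by exists v; rewrite addrC.
  exists (s * p ^+ m + v * p ^+ n + (t + v') * p ^+ n); split.
    have -> : s * p ^+ m + v * p ^+ n + (t + v') * p ^+ n =
       (s * p ^+ c + t) * p ^+ n + (v + v') * p ^+ n by rewrite pm; ring.
    by apply: (idealD HI); apply: (idealMr _ HI).
  exists (s * p ^+ m + v * p ^+ n + X), 0, (t + v'); split => //; first exact: VD.
  ring.
have FE : F E by split.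
exists m; split => //.
apply: (Jmax E FE JE).
exists 0; split; first exact: ideal0.
by exists 0, 1, 0; split; [exact: ideal0 | exact: V0 | rewrite mul1r mul0r !addr0 add0r].
Qed.


Lemma all_decomp (noeth : noetherian R) I : is_k_ideal I -> decomp I.
Proof.
move=> kI; apply: NNPP => nDI.
have [I0 [[kI0 nD] Imax]] : exists J, (is_k_ideal J /\ ~ decomp J) /\
    forall E, (is_k_ideal E /\ ~ decomp E) -> (forall x, J x -> E x) -> forall x, E x -> J x.
  by apply: max_elt => //; [move=> J [[]] | exists I].
have [HI0 kk0] := kI0.
case: (classic (I0 1)) => I01.
  apply: nD; apply: decomp_top => x; rewrite -(mulr1 x); exact: idealM.
pose col c := fun x => I0 (x * c).
have colI : forall c, is_ideal (col c).
  move=> c; split; first by exists 0; rewrite /col mul0r; exact: ideal0.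
  split; first by move=> x y Hx Hy; rewrite /col mulrDl; exact: idealD.
  by move=> r x Hx; rewrite /col -mulrA; exact: idealM.
have [Pm [[b [nb ->]] Pmax]] : exists L, (exists c, ~ I0 c /\ L = col c) /\
   forall E, (exists c, ~ I0 c /\ E = col c) -> (forall x, L x -> E x) -> forall x, E x -> L x.
  apply: max_elt => //; last by exists (col 1), 1.
  by move=> J [c [_ ->]].
have maxc : forall c, ~ I0 c -> (forall x, I0 (x * b) -> I0 (x * c)) ->
    forall x, I0 (x * c) -> I0 (x * b).
  by move=> c nc H x Hx; apply: (Pmax (col c)) => //; exists c.
pose P := col b.
have HP : is_ideal P by apply: colI.
have kP : forall x y, P (x + y) -> P x -> P y.
  by move=> x y; rewrite /P /col mulrDl; exact: kk0.
have IP : forall x, I0 x -> P x by move=> x Ix; rewrite /P /col; exact: idealMr.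
have nP1 : ~ P 1 by rewrite /P /col mul1r.
have Pprime : forall u v, P (u * v) -> P u \/ P v.
  move=> u v Huv; case: (classic (P u)) => Pu; [by left | right].
  apply: (maxc (u * b)) => //.
    by move=> x Hx; rewrite mulrCA; exact: idealM.
  by rewrite mulrA (mulrC v).
pose A := fun a => forall p, P p -> I0 (a * p).
have HA : is_ideal A.
  split; first by exists 0 => p _; rewrite mul0r; exact: ideal0.
  split; first by move=> x y Hx Hy p Pp; rewrite mulrDl; apply: (idealD HI0); [exact: Hx | exact: Hy].
  by move=> r x Hx p Pp; rewrite -mulrA; apply: (idealM _ HI0); exact: Hx.
have kA : forall x y, A (x + y) -> A x -> A y.
  move=> x y Hxy Hx p Pp; apply: (kk0 (x * p)); last exact: Hx.
  by rewrite -mulrDl; exact: Hxy.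
have IA : forall x, I0 x -> A x by move=> x Ix p _; exact: idealMr.
have Ab : A b by move=> p Pp; rewrite mulrC.
have DA : decomp A.
  apply: NNPP => nDA; apply: nb.
  by apply: (Imax A) => //; split.
have AP : forall z p, A z -> P p -> I0 (z * p) by move=> z p Az Pp; exact: Az.
have [J [HJ IJ JP JA JC]] := core noeth kI0 HP kP IP HA IA AP.
have Hprim := Qprim HP (ex_intro _ 1 nP1) Pprime HJ JP JC.
apply: nD; apply: (decomp_cap DA Hprim) => x; split.
  move=> Ix; split; first exact: IA.
  by exists 1; split => //; rewrite mul1r; exact: IJ.
move=> [Ax [u [nu Jux]]].
have Iux : I0 (u * x) by apply: JA => //; exact: (idealM _ HA).
apply: NNPP => nIx; apply: nu.
apply: (maxc x nIx); last exact: Iux.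
by move=> y Hy; rewrite mulrC; apply: Ax.
Qed.

Lemma min_decomp I : decomp I -> exists n (Q : 'I_n -> R -> Prop),
  ((forall i, is_primary (Q i)) /\ is_inter_of I Q setT) /\
  forall k, (k < n)%N -> ~ exists Q' : 'I_k -> R -> Prop,
     (forall i, is_primary (Q' i)) /\ is_inter_of I Q' setT.
Proof.
move=> [n0 HD0]; apply: NNPP => H.
suff : forall n, ~ exists Q : 'I_n -> R -> Prop,
     (forall i, is_primary (Q i)) /\ is_inter_of I Q setT by move/(_ n0); apply.
elim/ltn_ind => n IH [Q HQ]; apply: H; exists n, Q; split => //.
Qed.

End Aux.

Theorem theorem2p7 (R : comNzSemiRingType) (I : R -> Prop) :
  noetherian R -> is_k_ideal I ->
  exists (n : nat) (Q : 'I_n -> R -> Prop), reduced_primary_decomposition I Q.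
Proof.
move=> noeth kI.
have [n [Q [[HP HI] Hmin]]] := min_decomp (all_decomp noeth kI).
exists n, Q; split; first by []; split; first by []; split.
- move=> i j nij Hrad.
  pose Q2 := fun k => if k == i then (fun x => Q i x /\ Q j x) else Q k.
  have [Q' HQ'] : exists Q' : 'I_#|[set~ j]| -> R -> Prop,
       (forall k, is_primary (Q' k)) /\ is_inter_of I Q' setT.
    apply: (@restrict_decomp _ I n Q2).
      move=> k _; rewrite /Q2; case: eqP => _; last exact: HP.
      exact: merge_primary.
    move=> x; rewrite (HI x); split.
      move=> H k _; rewrite /Q2; case: eqP => _; last exact: H (in_setT _).
      by split; apply: H; exact: in_setT.
    move=> H k _.
    case: (eqVneq k j) => [-> | nkj].
      have : i \in [set~ j] by rewrite !inE nij.
      by move/H; rewrite /Q2 eqxx => -[].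
    have : k \in [set~ j] by rewrite !inE.
    move/H; rewrite /Q2; case: eqP => [-> []|] //.
  apply: (Hmin #|[set~ j]|); last by exists Q'.
  rewrite cardsC1 card_ord ltn_predL.
  exact: (leq_ltn_trans (leq0n i) (ltn_ord i)).
- move=> S nS HS.
  have [Q' HQ'] := restrict_decomp (fun i _ => HP i) HS.
  apply: (Hmin #|S|); last by exists Q'.
  have := proper_card (A := S) (B := [set: 'I_n]).
  rewrite properT nS cardsT card_ord; apply => //.
Qed.
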